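(* Let $h:S\to S$ be a homeomorphism of the Riemann sphere $S=\mathbb{C}\cup\{\infty\}$ with $h(\infty)=\infty$, and suppose there are nice lattices $\Gamma_1,\Gamma_2$ with $h\Gamma_1h^{-1}=\Gamma_2$. If two distinct directions are good for $h$, then $h\in\mathcal{I}$.
   Context: $\mathcal{I}$ is the isometry group of hyperbolic $3$-space $\mathbb{H}^3=\mathbb{C}\times(0,\infty)$, identified (via boundary extension) with the group of conformal transformations of $S$ (homeomorphisms of $S$ mapping generalized circles to generalized circles). A nice lattice is a subgroup $\Gamma\subset\mathcal{I}$ acting freely, properly discontinuously and cocompactly on $\mathbb{H}^3$. A line $L\subset\mathbb{C}$ is good for $h$ if $h(L)$ is a line and $h|_L:L\to h(L)$ is an affine map (it scales lengths by a constant positive factor). A direction $D$ (a parallel class of lines in $\mathbb{C}$) is good for $h$ if every line of direction $D$ is good for $h$. *)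

(* Defs.v *)
From Stdlib Require Import Reals List.
From Coquelicot Require Import Coquelicot.
Open Scope R_scope.

(** * The Riemann sphere S = C ∪ {∞}; [None] is the point ∞. *)
Definition Sph : Type := option C.

(** Sequential convergence in S (S is metrizable, so sequential notions suffice). *)
Definition S_conv (u : nat -> Sph) (l : Sph) : Prop :=
  match l with
  | Some w => is_lim_seq (fun n => match u n with
                                   | Some z => Cmod (z - w)%C
                                   | None => 1 end) 0
  | None => is_lim_seq (fun n => match u n with
                                 | Some z => / (1 + Cmod z)
                                 | None => 0 end) 0
  end.

Definition S_cont (f : Sph -> Sph) : Prop :=
  forall u l, S_conv u l -> S_conv (fun n => f (u n)) (f l).

Definition homeomorphism (f : Sph -> Sph) : Prop :=
  exists g : Sph -> Sph,
    (forall x, g (f x) = x) /\ (forall y, f (g y) = y) /\ S_cont f /\ S_cont g.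

Definition line (p v : C) : C -> Prop := fun z => exists s : R, z = (p + RtoC s * v)%C.

Definition is_line (L : C -> Prop) : Prop :=
  exists p v : C, v <> 0%C /\ forall z, L z <-> line p v z.

Definition gen_circle (A : Sph -> Prop) : Prop :=
  (exists (c : C) (r : R), 0 < r /\
     forall x, A x <-> exists z, x = Some z /\ Cmod (z - c)%C = r)
  \/ (exists L : C -> Prop, is_line L /\
     forall x, A x <-> (x = None \/ exists z, x = Some z /\ L z)).

Definition image (f : Sph -> Sph) (A : Sph -> Prop) : Sph -> Prop :=
  fun y => exists x, A x /\ f x = y.

(** Conformal transformations of S: homeomorphisms mapping generalized
    circles to generalized circles.  Via boundary extension this is the
    isometry group I of H^3. *)
Definition conformal (f : Sph -> Sph) : Prop :=
  homeomorphism f /\ forall A, gen_circle A -> gen_circle (image f A).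

Record H3 : Type := mkH3 { hz : C; ht : R; ht_pos : 0 < ht }.

Definition acosh (x : R) : R := ln (x + sqrt (x ^ 2 - 1)).

Definition hdist (p q : H3) : R :=
  acosh (1 + (Cmod (hz p - hz q)%C ^ 2 + (ht p - ht q) ^ 2) / (2 * ht p * ht q)).

Definition h_isometry (F : H3 -> H3) : Prop :=
  (forall p q, hdist (F p) (F q) = hdist p q) /\ (forall q, exists p, F p = q).

Definition h_conv (x : nat -> H3) (p : H3) : Prop :=
  is_lim_seq (fun n => hdist (x n) p) 0.

(** convergence of a sequence in H^3 to a point of the boundary S
    (topology of the compactification H^3 ∪ S) *)
Definition to_bdry (x : nat -> H3) (zeta : Sph) : Prop :=
  match zeta with
  | Some w => is_lim_seq (fun n => Cmod (hz (x n) - w)%C) 0 /\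
              is_lim_seq (fun n => ht (x n)) 0
  | None => is_lim_seq (fun n => Cmod (hz (x n)) + ht (x n)) p_infty
  end.

Definition extends (g : Sph -> Sph) (F : H3 -> H3) : Prop :=
  h_isometry F /\
  forall (x : nat -> H3) (zeta : Sph), to_bdry x zeta -> to_bdry (fun n => F (x n)) (g zeta).

Definition h_compact (K : H3 -> Prop) : Prop :=
  forall x : nat -> H3, (forall n, K (x n)) ->
    exists phi : nat -> nat, (forall n, (phi n < phi (S n))%nat) /\
      exists p, K p /\ h_conv (fun n => x (phi n)) p.

(** subgroups of I (elements of I seen as conformal maps of S) *)
Definition subgroup_I (G : (Sph -> Sph) -> Prop) : Prop :=
  (forall g, G g -> conformal g) /\
  G (fun x => x) /\
  (forall g1 g2, G g1 -> G g2 -> G (fun x => g1 (g2 x))) /\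
  (forall g, G g -> exists g', G g' /\ (forall x, g (g' x) = x) /\ (forall x, g' (g x) = x)).

(** nice lattice: a subgroup of I whose action on H^3 (by the isometric
    extensions of its elements) is free, properly discontinuous and cocompact. *)
Definition nice_lattice (G : (Sph -> Sph) -> Prop) : Prop :=
  subgroup_I G /\
  exists act : (Sph -> Sph) -> H3 -> H3,
    (forall g, G g -> extends g (act g)) /\
    (forall g x, G g -> act g x = x -> g = (fun y => y)) /\
    (forall K, h_compact K ->
       exists l : list (Sph -> Sph),
         forall g, G g -> (exists x, K x /\ K (act g x)) -> In g l) /\
    (exists K, h_compact K /\ forall y, exists g x, G g /\ K x /\ act g x = y).

Definition good_line (h : Sph -> Sph) (L : C -> Prop) : Prop :=
  (exists L' : C -> Prop, is_line L' /\
     forall y, (exists z, L z /\ h (Some z) = y) <-> (exists w, y = Some w /\ L' w)) /\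
  (exists lam : R, 0 < lam /\
     forall x y hx hy, L x -> L y -> h (Some x) = Some hx -> h (Some y) = Some hy ->
       Cmod (hx - hy)%C = lam * Cmod (x - y)%C).

Definition good_direction (h : Sph -> Sph) (v : C) : Prop :=
  forall p : C, good_line h (line p v).

(* Main.v *)
Require Import Defs.
From Stdlib Require Import Reals List.
From Stdlib Require Import Lra Lia Psatz Classical FinFun ClassicalEpsilon ProofIrrelevance.
From Coquelicot Require Import Coquelicot.
Open Scope R_scope.

Lemma Cmod_sq (z : C) : Cmod z ^ 2 = fst z ^ 2 + snd z ^ 2.
Proof. unfold Cmod. rewrite pow2_sqrt; [reflexivity|nra]. Qed.

Lemma Cmod_eq_iff (z : C) (r : R) : 0 <= r -> (Cmod z = r <-> fst z ^ 2 + snd z ^ 2 = r ^ 2).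
Proof.
  intros Hr; split; intros H.
  - rewrite <- Cmod_sq, H; reflexivity.
  - unfold Cmod. rewrite H. rewrite sqrt_pow2; auto.
Qed.

Lemma Cmod_scal (s : R) (v : C) : Cmod (RtoC s * v) = Rabs s * Cmod v.
Proof. rewrite Cmod_mult, Cmod_R. reflexivity. Qed.

Definition hC (h : Sph -> Sph) (z : C) : C :=
  match h (Some z) with Some w => w | None => 0%C end.

Lemma hom_inj h : homeomorphism h -> forall x y, h x = h y -> x = y.
Proof.
  intros [g [H1 _]] x y E. rewrite <- (H1 x), <- (H1 y), E. reflexivity.
Qed.

Lemma hSome h : homeomorphism h -> h None = None -> forall z, h (Some z) = Some (hC h z).
Proof.
  intros Hh HN z. unfold hC. destruct (h (Some z)) eqn:E; auto.
  rewrite <- HN in E. apply hom_inj in E; auto. discriminate.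
Qed.

Lemma hC_inj h : homeomorphism h -> h None = None -> forall z w, hC h z = hC h w -> z = w.
Proof.
  intros Hh HN z w E.
  assert (h (Some z) = h (Some w)) as E2 by (rewrite !hSome; auto; rewrite E; auto).
  apply hom_inj in E2; auto. inversion E2; auto.
Qed.

Lemma hC_surj h : homeomorphism h -> h None = None -> forall w, exists z, hC h z = w.
Proof.
  intros Hh HN w. pose proof Hh as [g [H1 [H2 _]]].
  destruct (g (Some w)) as [z|] eqn:E.
  - exists z. pose proof (H2 (Some w)) as H. rewrite E in H.
    rewrite hSome in H; auto. inversion H; auto.
  - pose proof (H2 (Some w)) as H. rewrite E, HN in H. discriminate.
Qed.

Lemma real3 (k A B s : R) : 0 < k -> Rabs A = k * Rabs s -> Rabs B = k ->
  Rabs (A - B) = k * Rabs (s - 1) -> A = B * s.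
Proof.
  intros Hk H1 H2 H3.
  assert (E1 : A ^ 2 = k ^ 2 * s ^ 2).
  { rewrite <- (pow2_abs A), H1, <- (pow2_abs s). ring. }
  assert (E2 : B ^ 2 = k ^ 2).
  { rewrite <- (pow2_abs B), H2. ring. }
  assert (E3 : (A - B) ^ 2 = k ^ 2 * (s - 1) ^ 2).
  { rewrite <- (pow2_abs (A - B)), H3, <- (pow2_abs (s - 1)). ring. }
  assert (E4 : A * B = B ^ 2 * s).
  { assert (HH : (A - B) ^ 2 = A ^ 2 - 2 * (A * B) + B ^ 2) by ring.
    assert (HH2 : k ^ 2 * (s - 1) ^ 2 = k ^ 2 * s ^ 2 - 2 * (k ^ 2 * s) + k ^ 2) by ring.
    rewrite E2. lra. }
  assert (B <> 0) by (intro HB; rewrite HB in E2; nra).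
  apply (Rmult_eq_reg_r B); auto. rewrite E4. ring.
Qed.

Lemma affine_dir (h : Sph -> Sph) (v : C) : homeomorphism h -> h None = None -> v <> 0%C ->
  good_direction h v ->
  forall p s, hC h (p + RtoC s * v)%C = (hC h p + RtoC s * (hC h (p + v) - hC h p))%C.
Proof.
  intros Hh HN Hv Hg p s.
  destruct (Hg p) as [[L' [HL' Himg]] [lam [Hlam Hsc]]].
  destruct HL' as [p' [v' [Hv' HL'']]].
  assert (onl : forall s0, exists r, hC h (p + RtoC s0 * v)%C = (p' + RtoC r * v')%C).
  { intros s0. destruct (proj1 (Himg (Some (hC h (p + RtoC s0 * v)%C)))) as [w [Ew Lw]].
    { exists (p + RtoC s0 * v)%C. split. exists s0; reflexivity. apply hSome; auto. }
    inversion Ew; subst. apply HL'' in Lw. destruct Lw as [r Hr]. exists r; auto. }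
  assert (sc : forall s1 s2, Cmod (hC h (p + RtoC s1 * v)%C - hC h (p + RtoC s2 * v)%C)
                = lam * (Rabs (s1 - s2) * Cmod v)).
  { intros s1 s2. rewrite Hsc with (x := (p + RtoC s1 * v)%C) (y := (p + RtoC s2 * v)%C).
    - f_equal. replace (p + RtoC s1 * v - (p + RtoC s2 * v))%C with (RtoC (s1 - s2) * v)%C.
      apply Cmod_scal. unfold RtoC; apply injective_projections; simpl; ring.
    - exists s1; reflexivity.
    - exists s2; reflexivity.
    - apply hSome; auto.
    - apply hSome; auto. }
  assert (Hp : (p + RtoC 0 * v)%C = p) by ring.
  assert (Hp1 : (p + RtoC 1 * v)%C = (p + v)%C) by ring.
  destruct (onl s) as [rs Es]. destruct (onl 0) as [r0 E0]. destruct (onl 1) as [r1 E1].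
  assert (Cv' : 0 < Cmod v') by (apply Cmod_gt_0; auto).
  assert (Cv : 0 < Cmod v) by (apply Cmod_gt_0; auto).
  assert (D : forall a b, Cmod ((p' + RtoC a * v') - (p' + RtoC b * v'))%C = Rabs (a - b) * Cmod v').
  { intros a b. replace ((p' + RtoC a * v') - (p' + RtoC b * v'))%C with (RtoC (a - b) * v')%C.
    apply Cmod_scal. unfold RtoC; apply injective_projections; simpl; ring. }
  set (k := lam * Cmod v / Cmod v').
  assert (Hk : 0 < k) by (unfold k; apply Rdiv_lt_0_compat; nra).
  assert (G : forall a b s1 s2, hC h (p + RtoC s1 * v)%C = (p' + RtoC a * v')%C ->
             hC h (p + RtoC s2 * v)%C = (p' + RtoC b * v')%C ->
             Rabs (a - b) = k * Rabs (s1 - s2)).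
  { intros a b s1 s2 Ea Eb. pose proof (sc s1 s2) as S. rewrite Ea, Eb, D in S.
    unfold k. apply (Rmult_eq_reg_r (Cmod v')); [|lra].
    rewrite S. field. lra. }
  assert (Hrel : rs - r0 = (r1 - r0) * s).
  { apply (real3 k); auto.
    - rewrite <- (Rminus_0_r s). apply G; auto.
    - replace k with (k * Rabs (1 - 0)). apply G; auto.
      replace (1 - 0) with 1 by ring. rewrite Rabs_R1; ring.
    - replace (rs - r0 - (r1 - r0)) with (rs - r1) by ring. apply G; auto. }
  rewrite Es. rewrite Hp in E0. rewrite Hp1 in E1. rewrite E0, E1.
  replace rs with (r0 + (r1 - r0) * s) by lra.
  unfold RtoC; apply injective_projections; simpl; ring.
Qed.

Definition det2 (x y : C) : R := fst x * snd y - snd x * fst y.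

Lemma Ceq (x y : C) : fst x = fst y -> snd x = snd y -> x = y.
Proof. intros; apply injective_projections; auto. Qed.

Lemma decomp (v1 v2 z : C) : det2 v1 v2 <> 0 ->
  z = (RtoC (det2 z v2 / det2 v1 v2) * v1 + RtoC (det2 v1 z / det2 v1 v2) * v2)%C.
Proof.
  intros D. unfold det2 in *. apply Ceq; simpl; field; auto.
Qed.

Lemma det_lin (v1 v2 : C) (s r : R) : det2 (RtoC s * v1 + RtoC r * v2)%C v2 = s * det2 v1 v2.
Proof. unfold det2; simpl; ring. Qed.
Lemma det_lin2 (v1 v2 : C) (s r : R) : det2 v1 (RtoC s * v1 + RtoC r * v2)%C = r * det2 v1 v2.
Proof. unfold det2; simpl; ring. Qed.

Lemma bilin_deg (H : C -> C) (v1 v2 c a b d : C) : det2 v1 v2 <> 0 ->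
  (forall z w, H z = H w -> z = w) -> (forall w, exists z, H z = w) ->
  (forall s r, H (RtoC s * v1 + RtoC r * v2)%C = (c + RtoC s * a + RtoC r * b + RtoC (s * r) * d)%C) ->
  d = 0%C.
Proof.
  intros D Hi Hs Hf.
  apply NNPP; intro Hd.
  destruct (Req_dec (det2 b d) 0) as [Dbd|Dbd].
  - destruct (Req_dec (det2 a d) 0) as [Dad|Dad].
    + (* degenerate: image in a line *)
      set (Jd := ((- snd d)%R, fst d) : C).
      destruct (Hs (c + Jd)%C) as [z Hz].
      rewrite (decomp v1 v2 z D) in Hz. rewrite Hf in Hz.
      set (s := det2 z v2 / det2 v1 v2) in Hz.
      set (r := det2 v1 z / det2 v1 v2) in Hz.
      assert (Hd2 : 0 < fst d ^ 2 + snd d ^ 2).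
      { destruct (Req_dec (fst d) 0); destruct (Req_dec (snd d) 0); try nra.
        exfalso; apply Hd; apply Ceq; simpl; auto. }
      assert (E1 := f_equal fst Hz). assert (E2 := f_equal snd Hz). simpl in E1, E2.
      unfold det2 in Dbd, Dad.
      (* take det2 d (.) of both sides *)
      unfold Jd in E1, E2; simpl in E1, E2.
      assert (HX : s * fst a + r * fst b + s * r * fst d = - snd d) by lra.
      assert (HY : s * snd a + r * snd b + s * r * snd d = fst d) by lra.
      assert (Q : fst d * (s * snd a + r * snd b + s * r * snd d) - snd d * (s * fst a + r * fst b + s * r * fst d) = - s * (fst a * snd d - snd a * fst d) - r * (fst b * snd d - snd b * fst d)) by ring.
      rewrite HX, HY, Dad, Dbd in Q. nra.
    + set (col2 := (- (fst a + fst d), - (snd a + snd d))%R : C).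
      set (Dl := det2 a col2).
      assert (HD : Dl <> 0) by (unfold Dl, col2, det2 in *; simpl; intro; apply Dad; lra).
      set (s0 := det2 b col2 / Dl). set (s1 := det2 a b / Dl).
      assert (E : H (RtoC s0 * v1 + RtoC 0 * v2)%C = H (RtoC s1 * v1 + RtoC 1 * v2)%C).
      { rewrite !Hf. unfold s0, s1, Dl, col2, det2 in *. apply Ceq; simpl; field; auto. }
      apply Hi in E. apply (f_equal (det2 v1)) in E. rewrite !det_lin2 in E. apply D. lra.
  - set (col2 := (- (fst b + fst d), - (snd b + snd d))%R : C).
    set (Dl := det2 b col2).
    assert (HD : Dl <> 0) by (unfold Dl, col2, det2 in *; simpl; intro; apply Dbd; lra).
    set (r0 := det2 a col2 / Dl). set (r1 := det2 b a / Dl).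
    assert (E : H (RtoC 0 * v1 + RtoC r0 * v2)%C = H (RtoC 1 * v1 + RtoC r1 * v2)%C).
    { rewrite !Hf. unfold r0, r1, Dl, col2, det2 in *. apply Ceq; simpl; field; auto. }
    apply Hi in E. apply (f_equal (fun z => det2 z v2)) in E. rewrite !det_lin in E. apply D. lra.
Qed.

Lemma indep_det (v1 v2 : C) : v1 <> 0%C -> (forall r : R, v2 <> (RtoC r * v1)%C) -> det2 v1 v2 <> 0.
Proof.
  intros H1 H2 D. unfold det2 in D.
  assert (P : 0 < fst v1 ^ 2 + snd v1 ^ 2).
  { destruct (Req_dec (fst v1) 0); destruct (Req_dec (snd v1) 0); try nra.
    exfalso; apply H1; apply Ceq; simpl; auto. }
  apply (H2 ((fst v1 * fst v2 + snd v1 * snd v2) / (fst v1 ^ 2 + snd v1 ^ 2))).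
  set (X := fst v1 * fst v2 + snd v1 * snd v2). set (N := fst v1 ^ 2 + snd v1 ^ 2).
  assert (K1 : X * fst v1 = fst v2 * N + snd v1 * (fst v1 * snd v2 - snd v1 * fst v2)) by (unfold X, N; ring).
  assert (K2 : X * snd v1 = snd v2 * N - fst v1 * (fst v1 * snd v2 - snd v1 * fst v2)) by (unfold X, N; ring).
  rewrite D in K1, K2.
  apply Ceq; simpl.
  - assert (HN : N <> 0) by (unfold N; lra).
    replace (X / N * fst v1) with ((X * fst v1) / N) by (field; exact HN). rewrite K1. field; exact HN.
  - assert (HN : N <> 0) by (unfold N; lra).
    replace (X / N * snd v1) with ((X * snd v1) / N) by (field; exact HN). rewrite K2. field; exact HN.
Qed.

Lemma affine_rep (h : Sph -> Sph) (v1 v2 : C) : homeomorphism h -> h None = None ->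
  v1 <> 0%C -> v2 <> 0%C -> det2 v1 v2 <> 0 ->
  good_direction h v1 -> good_direction h v2 ->
  forall z, hC h z = (hC h 0 + RtoC (fst z) * (hC h (1, 0) - hC h 0)
                      + RtoC (snd z) * (hC h (0, 1) - hC h 0))%C.
Proof.
  intros Hh HN Hv1 Hv2 D G1 G2.
  set (c := hC h 0%C).
  set (a := (hC h v1 - c)%C). set (b := (hC h v2 - c)%C).
  set (d := (hC h (v1 + v2)%C - hC h v1 - hC h v2 + c)%C).
  assert (Bi : forall s r, hC h (RtoC s * v1 + RtoC r * v2)%C =
                 (c + RtoC s * a + RtoC r * b + RtoC (s * r) * d)%C).
  { intros s r.
    pose proof (affine_dir h v1 Hh HN Hv1 G1 (RtoC r * v2)%C s) as E1.
    pose proof (affine_dir h v2 Hh HN Hv2 G2 0%C r) as E2.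
    pose proof (affine_dir h v2 Hh HN Hv2 G2 v1 r) as E3.
    replace (0 + RtoC r * v2)%C with (RtoC r * v2)%C in E2 by ring.
    replace (0 + v2)%C with v2 in E2 by ring.
    replace (RtoC r * v2 + v1)%C with (v1 + RtoC r * v2)%C in E1 by ring.
    replace (RtoC s * v1 + RtoC r * v2)%C with (RtoC r * v2 + RtoC s * v1)%C by ring.
    rewrite E1, E3, E2. unfold d, a, b; unfold c. rewrite RtoC_mult. ring. }
  assert (d0 : d = 0%C).
  { apply (bilin_deg (hC h) v1 v2 c a b d D); auto.
    - apply hC_inj; auto.
    - apply hC_surj; auto. }
  assert (Af : forall z, hC h z = (c + RtoC (det2 z v2 / det2 v1 v2) * a + RtoC (det2 v1 z / det2 v1 v2) * b)%C).
  { intros z. rewrite (decomp v1 v2 z D) at 1. rewrite Bi, d0. ring. }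
  intros z. rewrite (Af z), (Af (1, 0)), (Af (0, 1)).
  unfold det2 in *. apply Ceq; simpl; field; auto.
Qed.

Ltac csimpl := unfold Cminus, Cplus, Copp, Cmult, RtoC; cbn [fst snd].
Ltac csimpl_in H := unfold Cminus, Cplus, Copp, Cmult, RtoC in H; cbn [fst snd] in H.


Lemma sim_of_circle (H : C -> C) (c al be w1 c' : C) (r' : R) :
  (forall z, H z = (c + RtoC (fst z) * al + RtoC (snd z) * be)%C) ->
  det2 al be <> 0 ->
  (forall z, fst (z - w1)%C ^ 2 + snd (z - w1)%C ^ 2 = 1 ->
             fst (H z - c')%C ^ 2 + snd (H z - c')%C ^ 2 = r' ^ 2) ->
  fst al ^ 2 + snd al ^ 2 = r' ^ 2 /\ fst be ^ 2 + snd be ^ 2 = r' ^ 2 /\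
  fst al * fst be + snd al * snd be = 0.
Proof.
  intros Hr D Hc.
  assert (I : forall ex ey, ex ^ 2 + ey ^ 2 = 1 ->
     (ex * fst al + ey * fst be - (fst c' - fst c - fst w1 * fst al - snd w1 * fst be)) ^ 2 +
     (ex * snd al + ey * snd be - (snd c' - snd c - fst w1 * snd al - snd w1 * snd be)) ^ 2 = r' ^ 2).
  { intros ex ey E. pose proof (Hc (w1 + (ex, ey))%C) as K.
    rewrite Hr in K. csimpl_in K.
    assert (K2 : (fst w1 + ex + - fst w1) ^ 2 + (snd w1 + ey + - snd w1) ^ 2 = 1).
    { replace (fst w1 + ex + - fst w1) with ex by ring.
      replace (snd w1 + ey + - snd w1) with ey by ring. auto. }
    specialize (K K2). rewrite <- K. ring. }
  set (q1 := fst c' - fst c - fst w1 * fst al - snd w1 * fst be) in I.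
  set (q2 := snd c' - snd c - fst w1 * snd al - snd w1 * snd be) in I.
  pose proof (I 1 0 ltac:(ring)) as I1.
  pose proof (I (-1) 0 ltac:(ring)) as I2.
  pose proof (I 0 1 ltac:(ring)) as I3.
  pose proof (I 0 (-1) ltac:(ring)) as I4.
  pose proof (I (3/5) (4/5) ltac:(field)) as I5.
  assert (Qa : fst al * q1 + snd al * q2 = 0) by nra.
  assert (Qb : fst be * q1 + snd be * q2 = 0) by nra.
  unfold det2 in D.
  assert (Z1 : q1 * (fst al * snd be - snd al * fst be) = 0).
  { replace (q1 * (fst al * snd be - snd al * fst be)) with
      (snd be * (fst al * q1 + snd al * q2) - snd al * (fst be * q1 + snd be * q2)) by ring.
    rewrite Qa, Qb; ring. }
  assert (Z2 : q2 * (fst al * snd be - snd al * fst be) = 0).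
  { replace (q2 * (fst al * snd be - snd al * fst be)) with
      (fst al * (fst be * q1 + snd be * q2) - fst be * (fst al * q1 + snd al * q2)) by ring.
    rewrite Qa, Qb; ring. }
  apply Rmult_integral in Z1. apply Rmult_integral in Z2.
  destruct Z1 as [Z1|Z1]; [|contradiction]. destruct Z2 as [Z2|Z2]; [|contradiction].
  rewrite Z1, Z2 in I1, I3, I5.
  split; [nra|]. split; [nra|]. nra.
Qed.

Lemma conformal_of_sim (h : Sph -> Sph) (c al be : C) (rho : R) :
  homeomorphism h -> h None = None ->
  (forall z, hC h z = (c + RtoC (fst z) * al + RtoC (snd z) * be)%C) ->
  0 < rho ->
  fst al ^ 2 + snd al ^ 2 = rho ^ 2 -> fst be ^ 2 + snd be ^ 2 = rho ^ 2 ->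
  fst al * fst be + snd al * snd be = 0 ->
  conformal h.
Proof.
  intros Hh HN Hr Hrho Ha Hb Hab.
  assert (Dist : forall z w, Cmod (hC h z - hC h w) = rho * Cmod (z - w)).
  { intros z w. apply Cmod_eq_iff.
    - pose proof (Cmod_ge_0 (z - w)). nra.
    - rewrite Rpow_mult_distr, Cmod_sq, !Hr. csimpl.
      transitivity ((fst z - fst w)^2 * (fst al ^ 2 + snd al ^ 2) + (snd z - snd w)^2 * (fst be ^ 2 + snd be ^ 2) + 2 * (fst z - fst w) * (snd z - snd w) * (fst al * fst be + snd al * snd be)).
      ring. rewrite Ha, Hb, Hab. ring. }
  assert (Lin : forall p v (s : R), hC h (p + RtoC s * v)%C =
             (hC h p + RtoC s * (RtoC (fst v) * al + RtoC (snd v) * be))%C).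
  { intros p v s. rewrite !Hr. apply Ceq; simpl; ring. }
  split; auto.
  intros A [[c0 [r0 [Hr0 HA]]] | [L [[p [v [Hv HL]]] HA]]].
  - left. exists (hC h c0), (rho * r0). split; [nra|].
    intros x. split.
    + intros [x0 [Ax0 Ex]]. apply HA in Ax0. destruct Ax0 as [z0 [E0 C0]]. subst x0 x.
      exists (hC h z0). split. apply hSome; auto. rewrite Dist, C0. reflexivity.
    + intros [z [Ez Cz]]. subst x. destruct (hC_surj h Hh HN z) as [z0 E0]. subst z.
      exists (Some z0). split.
      * apply HA. exists z0. split; auto. rewrite Dist in Cz.
        apply (Rmult_eq_reg_l rho); lra.
      * apply hSome; auto.
  - right. set (Lv := (RtoC (fst v) * al + RtoC (snd v) * be)%C).
    assert (HLv : Lv <> 0%C).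
    { intro E. apply Hv. assert (E1 := f_equal fst E). assert (E2 := f_equal snd E).
      unfold Lv in E1, E2. simpl in E1, E2.
      assert (K : (fst v * fst al + snd v * fst be) ^ 2 + (fst v * snd al + snd v * snd be) ^ 2
              = rho ^ 2 * (fst v ^ 2 + snd v ^ 2)).
      { replace (rho ^ 2 * (fst v ^ 2 + snd v ^ 2)) with
          ((fst al ^ 2 + snd al ^ 2) * fst v ^ 2 + (fst be ^ 2 + snd be ^ 2) * snd v ^ 2
           + 2 * fst v * snd v * (fst al * fst be + snd al * snd be)) by (rewrite Ha, Hb, Hab; ring).
        ring. }
      assert (E1' : fst v * fst al + snd v * fst be = 0) by lra.
      assert (E2' : fst v * snd al + snd v * snd be = 0) by lra.
      rewrite E1', E2' in K.
      assert (0 < rho ^ 2) by nra.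
      assert (Z : fst v ^ 2 + snd v ^ 2 = 0).
      { apply (Rmult_eq_reg_l (rho ^ 2)); lra. }
      apply Ceq; simpl; nra. }
    exists (line (hC h p) Lv). split.
    + exists (hC h p), Lv. split; auto. intros; tauto.
    + intros x. split.
      * intros [x0 [Ax0 Ex]]. apply HA in Ax0. destruct Ax0 as [E0|[z0 [E0 Lz0]]]; subst.
        -- left; auto.
        -- right. apply HL in Lz0. destruct Lz0 as [s Es]. subst.
           exists (hC h (p + RtoC s * v)%C). split. apply hSome; auto.
           exists s. rewrite Lin. reflexivity.
      * intros [E|[z [Ez [s Es]]]]; subst.
        -- exists None. split; auto. apply HA. left; auto.
        -- exists (Some (p + RtoC s * v)%C). split.
           ++ apply HA. right. exists (p + RtoC s * v)%C. split; auto. apply HL. exists s; auto.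
           ++ rewrite hSome; auto. rewrite Lin. reflexivity.
Qed.


Lemma gen_circle_ext (A B : Sph -> Prop) : gen_circle A -> (forall x, A x <-> B x) -> gen_circle B.
Proof.
  intros [[c [r [Hr HA]]] | [L [HL HA]]] E.
  - left. exists c, r. split; auto. intros x. rewrite <- E. auto.
  - right. exists L. split; auto. intros x. rewrite <- E. auto.
Qed.

Lemma line_image (h : Sph -> Sph) (c al be : C) (A : Sph -> Prop) (L : C -> Prop) :
  homeomorphism h -> h None = None ->
  (forall z, hC h z = (c + RtoC (fst z) * al + RtoC (snd z) * be)%C) ->
  is_line L -> (forall x, A x <-> (x = None \/ exists z, x = Some z /\ L z)) ->
  gen_circle (image h A).
Proof.
  intros Hh HN Hr [p [v [Hv HL]]] HA.
  assert (Lin : forall p v (s : R), hC h (p + RtoC s * v)%C =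
             (hC h p + RtoC s * (RtoC (fst v) * al + RtoC (snd v) * be))%C).
  { intros p0 v0 s. rewrite !Hr. apply Ceq; simpl; ring. }
  right. set (Lv := (RtoC (fst v) * al + RtoC (snd v) * be)%C).
  assert (HLv : Lv <> 0%C).
  { intro E. apply Hv.
    assert (E2 : (p + v)%C = p).
    { apply (hC_inj h Hh HN).
      replace (p + v)%C with (p + RtoC 1 * v)%C by ring.
      rewrite Lin. fold Lv. rewrite E. ring. }
    assert (E3 := f_equal fst E2). assert (E4 := f_equal snd E2). simpl in E3, E4.
    apply Ceq; simpl; lra. }
  exists (line (hC h p) Lv). split.
  + exists (hC h p), Lv. split; auto. intros; tauto.
  + intros x. split.
    * intros [x0 [Ax0 Ex]]. apply HA in Ax0. destruct Ax0 as [E0|[z0 [E0 Lz0]]]; subst x0 x.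
      -- left; auto.
      -- right. apply HL in Lz0. destruct Lz0 as [s Es]. subst z0.
         exists (hC h (p + RtoC s * v)%C). split. apply hSome; auto.
         exists s. rewrite Lin. reflexivity.
    * intros [E|[z [Ez [s Es]]]]; subst.
      -- exists None. split; auto. apply HA. left; auto.
      -- exists (Some (p + RtoC s * v)%C). split.
         ++ apply HA. right. exists (p + RtoC s * v)%C. split; auto. apply HL. exists s; auto.
         ++ rewrite hSome; auto. rewrite Lin. reflexivity.
Qed.

Lemma det_nonzero (h : Sph -> Sph) (c al be : C) :
  homeomorphism h -> h None = None ->
  (forall z, hC h z = (c + RtoC (fst z) * al + RtoC (snd z) * be)%C) ->
  det2 al be <> 0.
Proof.
  intros Hh HN Hr D. unfold det2 in D.
  destruct (classic (al = 0%C)) as [Ha|Ha].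
  - assert (E : (1, 0)%R = (0, 0)%R :> C).
    { apply (hC_inj h Hh HN). rewrite !Hr, Ha. apply Ceq; simpl; ring. }
    inversion E. lra.
  - assert (P : 0 < fst al ^ 2 + snd al ^ 2).
    { destruct (Req_dec (fst al) 0); destruct (Req_dec (snd al) 0); try nra.
      exfalso; apply Ha; apply Ceq; simpl; auto. }
    set (r := (fst al * fst be + snd al * snd be) / (fst al ^ 2 + snd al ^ 2)).
    assert (K1 : r * fst al = fst be).
    { unfold r. replace ((fst al * fst be + snd al * snd be) / (fst al ^ 2 + snd al ^ 2) * fst al)
        with (((fst al * fst be + snd al * snd be) * fst al) / (fst al ^ 2 + snd al ^ 2)) by (field; lra).
      replace ((fst al * fst be + snd al * snd be) * fst al) with
        (fst be * (fst al ^ 2 + snd al ^ 2) + snd al * (fst al * snd be - snd al * fst be)) by ring.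
      rewrite D. field; lra. }
    assert (K2 : r * snd al = snd be).
    { unfold r. replace ((fst al * fst be + snd al * snd be) / (fst al ^ 2 + snd al ^ 2) * snd al)
        with (((fst al * fst be + snd al * snd be) * snd al) / (fst al ^ 2 + snd al ^ 2)) by (field; lra).
      replace ((fst al * fst be + snd al * snd be) * snd al) with
        (snd be * (fst al ^ 2 + snd al ^ 2) - fst al * (fst al * snd be - snd al * fst be)) by ring.
      rewrite D. field; lra. }
    assert (E : (r, -1)%R = (0, 0)%R :> C).
    { apply (hC_inj h Hh HN). rewrite !Hr. apply Ceq; simpl; nra. }
    inversion E. lra.
Qed.

Lemma conformal_from_nonfix (h : Sph -> Sph) (G1 G2 : (Sph -> Sph) -> Prop) (c al be : C) :
  homeomorphism h -> h None = None ->
  subgroup_I G1 -> subgroup_I G2 ->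
  (forall g, G2 g <-> exists g1, G1 g1 /\ forall x, g (h x) = h (g1 x)) ->
  (forall z, hC h z = (c + RtoC (fst z) * al + RtoC (snd z) * be)%C) ->
  (exists g w, G1 g /\ g None = Some w) ->
  conformal h.
Proof.
  intros Hh HN S1 S2 Hconj Hr [g [w [Gg Ew]]].
  pose proof (det_nonzero h c al be Hh HN Hr) as D.
  destruct S1 as [C1 [_ [_ Inv1]]]. destruct S2 as [C2 _].
  destruct (Inv1 g Gg) as [g' [Gg' [Kg1 Kg2]]].
  pose proof Hh as [hinv [Hi1 [Hi2 _]]].
  set (Cc := fun x => exists z, x = Some z /\ Cmod (z - (w + 1)) = 1).
  assert (GC : gen_circle Cc).
  { left. exists (w + 1)%C, 1. split; [lra|]. intros; unfold Cc; tauto. }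
  destruct (C1 g' Gg') as [_ Cg'].
  pose proof (Cg' Cc GC) as GC'.
  assert (NoneIn : image g' Cc None).
  { exists (Some w). split.
    - exists w. split; auto. replace (w - (w + 1))%C with (- (1))%C by ring.
      rewrite Cmod_opp, Cmod_1; reflexivity.
    - rewrite <- Ew. apply Kg2. }
  destruct GC' as [[c0 [r0 [_ HA]]] | [L [HL HA]]].
  { apply HA in NoneIn. destruct NoneIn as [z [E _]]; discriminate. }
  pose proof (line_image h c al be _ L Hh HN Hr HL HA) as GC2.
  set (phi := fun x => h (g (hinv x))).
  assert (Gphi : G2 phi).
  { apply Hconj. exists g. split; auto. intros x. unfold phi. rewrite Hi1. reflexivity. }
  destruct (C2 phi Gphi) as [_ Cphi].
  pose proof (Cphi _ GC2) as GC3.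
  assert (GC4 : gen_circle (image h Cc)).
  { apply (gen_circle_ext _ _ GC3). intros x. split.
    - intros [y [[y0 [[x0 [Cx0 E0]] E1]] E2]]. subst.
      exists x0. split; auto. unfold phi. rewrite Hi1, Kg1. reflexivity.
    - intros [x0 [Cx0 E0]]. subst. exists (h (g' x0)). split.
      + exists (g' x0). split; auto. exists x0; auto.
      + unfold phi. rewrite Hi1, Kg1. reflexivity. }
  destruct GC4 as [[c' [r' [Hr' HA']]] | [L' [_ HA']]].
  - destruct (sim_of_circle (hC h) c al be (w + 1)%C c' r' Hr D) as [Ha [Hb Hab]].
    + intros z Hz.
      assert (Cz : Cmod (z - (w + 1)) = 1) by (apply Cmod_eq_iff; [lra|]; rewrite Hz; ring).
      assert (Im : image h Cc (Some (hC h z))).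
      { exists (Some z). split. exists z; auto. apply hSome; auto. }
      apply HA' in Im. destruct Im as [z' [E Cz']]. inversion E; subst z'.
      apply Cmod_eq_iff in Cz'; auto. lra.
    + apply (conformal_of_sim h c al be r'); auto.
  - exfalso. assert (Im : image h Cc None) by (apply HA'; left; auto).
    destruct Im as [x0 [[z [E _]] E2]]. subst x0. rewrite hSome in E2; auto. discriminate.
Qed.


Definition Eh (p q : H3) : R :=
  1 + (Cmod (hz p - hz q) ^ 2 + (ht p - ht q) ^ 2) / (2 * ht p * ht q).

Lemma hdist_Eh p q : hdist p q = acosh (Eh p q).
Proof. reflexivity. Qed.

Lemma Eh_ge1 p q : 1 <= Eh p q.
Proof.
  unfold Eh. pose proof (ht_pos p). pose proof (ht_pos q).
  assert (0 <= (Cmod (hz p - hz q) ^ 2 + (ht p - ht q) ^ 2) / (2 * ht p * ht q)).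
  { apply Rdiv_le_0_compat.
    - pose proof (pow2_ge_0 (Cmod (hz p - hz q))). pose proof (pow2_ge_0 (ht p - ht q)). lra.
    - apply Rmult_lt_0_compat; lra. }
  lra.
Qed.

Lemma Eh_formula p q : Eh p q = (Cmod (hz p - hz q) ^ 2 + ht p ^ 2 + ht q ^ 2) / (2 * ht p * ht q).
Proof. unfold Eh. pose proof (ht_pos p). pose proof (ht_pos q). field. lra. Qed.

Lemma sqrt_ge_0_pre x : 1 <= x -> 0 <= x ^ 2 - 1.
Proof. intros; nra. Qed.

Lemma acosh_pos_arg x : 1 <= x -> 1 <= x + sqrt (x ^ 2 - 1).
Proof. intros. pose proof (sqrt_pos (x ^ 2 - 1)). lra. Qed.

Lemma acosh_inj a b : 1 <= a -> 1 <= b -> acosh a = acosh b -> a = b.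
Proof.
  intros Ha Hb E. unfold acosh in E.
  apply ln_inv in E; try (pose proof (acosh_pos_arg _ Ha); pose proof (acosh_pos_arg _ Hb); lra).
  destruct (Rtotal_order a b) as [L|[L|L]]; auto.
  - assert (sqrt (a ^ 2 - 1) <= sqrt (b ^ 2 - 1)) by (apply sqrt_le_1_alt; nra). lra.
  - assert (sqrt (b ^ 2 - 1) <= sqrt (a ^ 2 - 1)) by (apply sqrt_le_1_alt; nra). lra.
Qed.

Lemma iso_Eh F : h_isometry F -> forall p q, Eh (F p) (F q) = Eh p q.
Proof.
  intros [HF _] p q. apply acosh_inj; try apply Eh_ge1. rewrite <- !hdist_Eh. apply HF.
Qed.

Lemma acosh_1 : acosh 1 = 0.
Proof.
  unfold acosh. replace (1 ^ 2 - 1) with 0 by ring. rewrite sqrt_0, Rplus_0_r. apply ln_1.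
Qed.

Lemma acosh_nonneg x : 1 <= x -> 0 <= acosh x.
Proof.
  intros H. unfold acosh. rewrite <- ln_1. apply ln_le; [lra|]. apply acosh_pos_arg; auto.
Qed.

Lemma acosh_upper x : 1 <= x -> acosh x <= x - 1 + sqrt (x ^ 2 - 1).
Proof.
  intros H. unfold acosh. pose proof (acosh_pos_arg _ H) as P.
  pose proof (exp_ineq1_le (x - 1 + sqrt (x ^ 2 - 1))) as E.
  rewrite <- (ln_exp (x - 1 + sqrt (x ^ 2 - 1))). apply ln_le; lra.
Qed.

Lemma acosh_le1 x : 1 <= x -> acosh x <= 1 -> x <= 3.
Proof.
  intros H H1. unfold acosh in H1. pose proof (acosh_pos_arg _ H) as P.
  assert (x + sqrt (x ^ 2 - 1) <= exp 1).
  { rewrite <- (exp_ln (x + sqrt (x ^ 2 - 1))) by lra.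
    destruct (Rle_lt_or_eq_dec _ _ H1) as [L|L].
    - left. apply exp_increasing. auto.
    - rewrite L. lra. }
  pose proof exp_le_3. pose proof (sqrt_pos (x ^ 2 - 1)). lra.
Qed.

Lemma lim_acosh (u : nat -> R) : (forall n, 1 <= u n) -> is_lim_seq u 1 ->
  is_lim_seq (fun n => acosh (u n)) 0.
Proof.
  intros H L.
  apply is_lim_seq_le_le with (u := fun _ => 0) (w := fun n => u n - 1 + sqrt (u n ^ 2 - 1)).
  - intros n. split. apply acosh_nonneg; auto. apply acosh_upper; auto.
  - apply is_lim_seq_const.
  - replace (Finite 0) with (Finite (1 - 1 + sqrt (1 ^ 2 - 1))).
    2:{ f_equal. replace (1 ^ 2 - 1) with 0 by ring. rewrite sqrt_0. ring. }
    apply is_lim_seq_plus'.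
    + apply is_lim_seq_minus'; auto. apply is_lim_seq_const.
    + apply (is_lim_seq_continuous sqrt (fun n => u n ^ 2 - 1)).
      * apply continuity_pt_sqrt. lra.
      * apply is_lim_seq_minus'; [|apply is_lim_seq_const].
        replace (1 ^ 2) with (1 * 1) by ring. simpl.
        apply is_lim_seq_ext with (u := fun n => u n * u n). intros; ring.
        apply is_lim_seq_mult'; auto.
Qed.


Lemma abs_le_of_sq a b : 0 <= b -> a ^ 2 <= b ^ 2 -> Rabs a <= b.
Proof. intros Hb H. unfold Rabs. destruct (Rcase_abs a); nra. Qed.

Lemma abs_between x b : Rabs x <= b -> - b <= x <= b.
Proof. unfold Rabs. destruct (Rcase_abs x); lra. Qed.

Lemma lim_invS (w : nat -> C) (s : nat -> R) :
  is_lim_seq (fun n => Cmod (w n) + s n) p_infty ->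
  is_lim_seq (fun n => / sqrt (Cmod (w n) ^ 2 + s n ^ 2 + 1)) 0.
Proof.
  intros Hu.
  assert (L1 : is_lim_seq (fun n => / (Cmod (w n) + s n)) 0).
  { pose proof (is_lim_seq_inv _ _ Hu ltac:(discriminate)) as K. exact K. }
  assert (L2 : is_lim_seq (fun n => 2 * / (Cmod (w n) + s n)) 0).
  { replace (Finite 0) with (Finite (2 * 0)) by (f_equal; ring).
    apply is_lim_seq_mult'; auto. apply is_lim_seq_const. }
  apply is_lim_seq_le_le_loc with (u := fun _ => 0) (w := fun n => 2 * / (Cmod (w n) + s n)).
  - pose proof (proj2 (is_lim_seq_spec _ _) Hu 0) as Ev.
    revert Ev. apply filter_imp. intros n Hn.
    set (D := Cmod (w n) ^ 2 + s n ^ 2 + 1).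
    assert (HD : 0 < D) by (unfold D; pose proof (pow2_ge_0 (Cmod (w n))); pose proof (pow2_ge_0 (s n)); lra).
    assert (HS : 0 < sqrt D) by (apply sqrt_lt_R0; auto).
    split.
    + left. apply Rinv_0_lt_compat; auto.
    + assert (K : Cmod (w n) + s n <= 2 * sqrt D).
      { apply Rsqr_incr_0_var; [|lra]. unfold Rsqr.
        replace (2 * sqrt D * (2 * sqrt D)) with (4 * (sqrt D * sqrt D)) by ring.
        rewrite sqrt_sqrt by lra. unfold D.
        pose proof (pow2_ge_0 (Cmod (w n) - s n)). nra. }
      replace (2 * / (Cmod (w n) + s n)) with (/ ((Cmod (w n) + s n) / 2)) by (field; lra).
      apply Rinv_le_contravar; lra.
  - apply is_lim_seq_const.
  - auto.
Qed.

Lemma CS_ineq (z w : C) : Rabs (fst z * fst w + snd z * snd w) <= Cmod z * Cmod w.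
Proof.
  apply abs_le_of_sq.
  - apply Rmult_le_pos; apply Cmod_ge_0.
  - rewrite Rpow_mult_distr, !Cmod_sq.
    pose proof (pow2_ge_0 (fst z * snd w - snd z * fst w)). nra.
Qed.

Lemma ratio_bound (z w : C) (t sv : R) :
  Rabs ((Cmod (z - w) ^ 2 + t ^ 2 + sv ^ 2) / (Cmod w ^ 2 + sv ^ 2 + 1) - 1) <=
  (Cmod z ^ 2 + Rabs (t ^ 2 - 1)) * (/ sqrt (Cmod w ^ 2 + sv ^ 2 + 1) * / sqrt (Cmod w ^ 2 + sv ^ 2 + 1))
  + 2 * Cmod z * / sqrt (Cmod w ^ 2 + sv ^ 2 + 1).
Proof.
  set (D := Cmod w ^ 2 + sv ^ 2 + 1).
  assert (HD : 0 < D) by (unfold D; pose proof (pow2_ge_0 (Cmod w)); pose proof (pow2_ge_0 sv); lra).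
  set (S := sqrt D).
  assert (HS : 0 < S) by (apply sqrt_lt_R0; auto).
  assert (SS : S * S = D) by (apply sqrt_sqrt; lra).
  assert (WS : Cmod w <= S).
  { apply Rsqr_incr_0_var; [|lra]. unfold Rsqr. rewrite SS. unfold D. pose proof (pow2_ge_0 sv). nra. }
  set (num := Cmod (z - w) ^ 2 - Cmod w ^ 2 + t ^ 2 - 1).
  assert (Ex : (Cmod (z - w) ^ 2 + t ^ 2 + sv ^ 2) / D - 1 = num / D).
  { unfold num, D. field. fold D. lra. }
  assert (En : Cmod (z - w) ^ 2 - Cmod w ^ 2 = Cmod z ^ 2 - 2 * (fst z * fst w + snd z * snd w)).
  { rewrite !Cmod_sq. csimpl. ring. }
  assert (Bn : Rabs num <= (Cmod z ^ 2 + Rabs (t ^ 2 - 1)) + 2 * Cmod z * S).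
  { unfold num. replace (Cmod (z - w) ^ 2 - Cmod w ^ 2 + t ^ 2 - 1) with
      (Cmod (z - w) ^ 2 - Cmod w ^ 2 + (t ^ 2 - 1)) by ring.
    rewrite En.
    replace (Cmod z ^ 2 - 2 * (fst z * fst w + snd z * snd w)) with
      (Cmod z ^ 2 + - (2 * (fst z * fst w + snd z * snd w))) by ring.
    pose proof (CS_ineq z w) as K. pose proof (Cmod_ge_0 z) as Kz.
    pose proof (Rabs_triang (Cmod z ^ 2 + - (2 * (fst z * fst w + snd z * snd w))) (t ^ 2 - 1)).
    pose proof (Rabs_triang (Cmod z ^ 2) (- (2 * (fst z * fst w + snd z * snd w)))).
    rewrite Rabs_Ropp, Rabs_mult, (Rabs_right 2) in * by lra.
    rewrite (Rabs_right (Cmod z ^ 2)) in * by (apply Rle_ge; apply pow2_ge_0).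
    assert (Cmod z * Cmod w <= Cmod z * S) by (apply Rmult_le_compat_l; auto).
    lra. }
  rewrite Ex. unfold Rdiv. rewrite Rabs_mult, (Rabs_right (/ D)) by (left; apply Rinv_0_lt_compat; auto).
  apply Rle_trans with (((Cmod z ^ 2 + Rabs (t ^ 2 - 1)) + 2 * Cmod z * S) * / D).
  - apply Rmult_le_compat_r; auto. left; apply Rinv_0_lt_compat; auto.
  - rewrite <- SS. right. field. lra.
Qed.

Lemma lim_N (z : C) (t : R) (w : nat -> C) (s : nat -> R) :
  is_lim_seq (fun n => Cmod (w n) + s n) p_infty ->
  is_lim_seq (fun n => (Cmod (z - w n) ^ 2 + t ^ 2 + s n ^ 2) / (Cmod (w n) ^ 2 + s n ^ 2 + 1)) 1.
Proof.
  intros Hu.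
  pose proof (lim_invS w s Hu) as LS.
  set (iS := fun n => / sqrt (Cmod (w n) ^ 2 + s n ^ 2 + 1)) in LS.
  set (c0 := Cmod z ^ 2 + Rabs (t ^ 2 - 1)). set (c1 := 2 * Cmod z).
  set (B := fun n => c0 * (iS n * iS n) + c1 * iS n).
  assert (LB : is_lim_seq B 0).
  { unfold B. replace (Finite 0) with (Finite (c0 * (0 * 0) + c1 * 0)) by (f_equal; ring).
    apply is_lim_seq_plus'; apply is_lim_seq_mult'; try apply is_lim_seq_const; auto.
    apply is_lim_seq_mult'; auto. }
  apply is_lim_seq_le_le with (u := fun n => 1 - B n) (w := fun n => 1 + B n).
  - intros n. pose proof (ratio_bound z (w n) t (s n)) as K.
    apply abs_between in K. unfold B, iS, c0, c1. lra.
  - replace (Finite 1) with (Finite (1 - 0)) by (f_equal; ring).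
    apply is_lim_seq_minus'; auto. apply is_lim_seq_const.
  - replace (Finite 1) with (Finite (1 + 0)) by (f_equal; ring).
    apply is_lim_seq_plus'; auto. apply is_lim_seq_const.
Qed.


Definition o3 : H3 := mkH3 0%C 1 Rlt_0_1.

Lemma lim_unique (u : nat -> R) (a b : R) : is_lim_seq u a -> is_lim_seq u b -> a = b.
Proof.
  intros Ha Hb. apply is_lim_seq_unique in Ha. apply is_lim_seq_unique in Hb.
  rewrite Ha in Hb. inversion Hb. auto.
Qed.

Lemma sq_inj a b : 0 <= a -> 0 <= b -> a ^ 2 = b ^ 2 -> a = b.
Proof. intros. nra. Qed.

Lemma INR_plus_pos (n : nat) (c : R) : 0 < c -> 0 < INR n + c.
Proof. intros. pose proof (pos_INR n). lra. Qed.



Lemma lim_INR_plus (c : R) : 0 <= c -> is_lim_seq (fun n => INR n + c) p_infty.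
Proof.
  intros Hc. apply is_lim_seq_le_p_loc with (u := INR).
  - exists 0%nat. intros n _. lra.
  - apply is_lim_seq_INR.
Qed.

Lemma ratio_lim (x y : H3) (qs : nat -> H3) :
  is_lim_seq (fun n => Cmod (hz (qs n)) + ht (qs n)) p_infty ->
  is_lim_seq (fun n => Eh x (qs n) / Eh y (qs n)) (ht y / ht x).
Proof.
  intros Hq.
  pose proof (lim_N (hz x) (ht x) (fun n => hz (qs n)) (fun n => ht (qs n)) Hq) as Lx.
  pose proof (lim_N (hz y) (ht y) (fun n => hz (qs n)) (fun n => ht (qs n)) Hq) as Ly.
  pose proof (is_lim_seq_div' _ _ _ _ Lx Ly ltac:(lra)) as L.
  pose proof (is_lim_seq_scal_r _ (ht y / ht x) _ L) as L2.
  replace (Rbar_mult (1 / 1) (ht y / ht x)) with (Finite (ht y / ht x)) in L2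
    by (simpl; f_equal; field; pose proof (ht_pos x); lra).
  apply is_lim_seq_ext with (2 := L2). intros n.
  rewrite !Eh_formula.
  pose proof (ht_pos x). pose proof (ht_pos y). pose proof (ht_pos (qs n)).
  pose proof (pow2_ge_0 (Cmod (hz (qs n)))). pose proof (pow2_ge_0 (ht (qs n))).
  pose proof (pow2_ge_0 (Cmod (hz y - hz (qs n)))).
  pose proof (pow2_ge_0 (Cmod (hz x - hz (qs n)))).
  field. repeat split; nra.
Qed.

Section Struct.
Variable g : Sph -> Sph.
Variable F : H3 -> H3.
Hypothesis Hg : homeomorphism g.
Hypothesis HgN : g None = None.
Hypothesis HF : extends g F.

Lemma buse : forall p, ht (F p) = ht (F o3) * ht p.
Proof.
  intros p. destruct HF as [Iso Bd].
  set (q := fun n : nat => mkH3 0%C (INR n + 1) (INR_plus_pos n 1 Rlt_0_1)).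
  assert (Tq : to_bdry q None).
  { simpl. apply is_lim_seq_ext with (u := fun n => INR n + 1).
    - intros n. unfold q; cbn [hz ht]. rewrite Cmod_0. ring.
    - apply lim_INR_plus; lra. }
  pose proof (Bd q None Tq) as TF. rewrite HgN in TF. simpl in TF.
  pose proof (ratio_lim p o3 q Tq) as L1.
  pose proof (ratio_lim (F p) (F o3) (fun n => F (q n)) TF) as L2.
  assert (L3 : is_lim_seq (fun n => Eh p (q n) / Eh o3 (q n)) (ht (F o3) / ht (F p))).
  { apply is_lim_seq_ext with (2 := L2). intros n. rewrite !(iso_Eh F Iso). reflexivity. }
  pose proof (lim_unique _ _ _ L1 L3) as E. simpl in E.
  pose proof (ht_pos p). pose proof (ht_pos (F p)). pose proof (ht_pos (F o3)).
  apply (Rmult_eq_reg_r (/ ht (F p) * / ht p)).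
  - replace (ht (F p) * (/ ht (F p) * / ht p)) with (1 / ht p) by (field; lra).
    rewrite E. field; lra.
  - apply Rmult_integral_contrapositive; split; apply Rinv_neq_0_compat; lra.
Qed.

Lemma lam_pos : 0 < ht (F o3).
Proof. apply ht_pos. Qed.

Lemma horiz : forall p, hz (F p) = hC g (hz p).
Proof.
  intros p. pose proof HF as [Iso Bd].
  set (z := hz p). set (t := ht p). assert (Ht : 0 < t) by apply ht_pos.
  assert (Pq : forall n : nat, 0 < t / (INR n + 2)).
  { intros n. apply Rdiv_lt_0_compat; auto. apply INR_plus_pos; lra. }
  set (q := fun n : nat => mkH3 z (t / (INR n + 2)) (Pq n)).
  assert (Tq : to_bdry q (Some z)).
  { simpl. split.
    - apply is_lim_seq_ext with (u := fun _ => 0).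
      + intros n. unfold q; cbn [hz ht]. assert (Hzz : (z - z)%C = RtoC 0) by ring. rewrite Hzz, Cmod_0. reflexivity.
      + apply is_lim_seq_const.
    - unfold q; simpl.
      replace (Finite 0) with (Rbar_mult t 0) by (simpl; f_equal; ring).
      apply is_lim_seq_scal_l.
      apply is_lim_seq_ext with (u := fun n => / (INR n + 2)).
      + intros n; unfold Rdiv; ring.
      + replace (Finite 0) with (Rbar_inv p_infty) by reflexivity.
        apply is_lim_seq_inv; [apply lim_INR_plus; lra | discriminate]. }
  pose proof (Bd q (Some z) Tq) as TF.
  pose proof (hSome g Hg HgN z) as Ez. rewrite Ez in TF. simpl in TF. destruct TF as [TF1 _].
  set (lam := ht (F o3)). assert (Hl : 0 < lam) by apply ht_pos.
  assert (Const : forall n, hz (F (q n)) = hz (F p)).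
  { intros n. pose proof (iso_Eh F Iso p (q n)) as E. unfold Eh in E.
    rewrite (buse p), (buse (q n)) in E. fold lam in E.
    change (hz (q n)) with z in E. change (ht (q n)) with (t / (INR n + 2)) in E.
    fold z in E. fold t in E.
    assert (Hzz : (z - z)%C = RtoC 0) by ring. rewrite Hzz, Cmod_0 in E.
    set (s := t / (INR n + 2)) in E. assert (Hs : 0 < s) by apply Pq.
    set (A := Cmod (hz (F p) - hz (F (q n)))) in E.
    assert (E2 : A ^ 2 / (2 * (lam * t) * (lam * s)) = 0).
    { replace (1 + (A ^ 2 + (lam * t - lam * s) ^ 2) / (2 * (lam * t) * (lam * s))) with
        (1 + A ^ 2 / (2 * (lam * t) * (lam * s)) + (t - s) ^ 2 / (2 * t * s)) in E by (field; lra).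
      lra. }
    assert (E3 : A ^ 2 = 0).
    { replace (A ^ 2) with (A ^ 2 / (2 * (lam * t) * (lam * s)) * (2 * (lam * t) * (lam * s))) by (field; nra).
      rewrite E2. ring. }
    assert (E4 : A = 0) by nra.
    apply Cmod_eq_0 in E4.
    assert (E5 := f_equal fst E4). assert (E6 := f_equal snd E4). csimpl_in E5. csimpl_in E6.
    apply Ceq; simpl in *; lra. }
  assert (L : is_lim_seq (fun _ => Cmod (hz (F p) - hC g z)) 0).
  { apply is_lim_seq_ext with (2 := TF1). intros n. rewrite Const. reflexivity. }
  pose proof (lim_unique _ _ _ (is_lim_seq_const (Cmod (hz (F p) - hC g z))) L) as E.
  apply Cmod_eq_0 in E.
  assert (E5 := f_equal fst E). assert (E6 := f_equal snd E). csimpl_in E5. csimpl_in E6.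
  apply Ceq; simpl in *; lra.
Qed.

Lemma simil : forall z w, Cmod (hC g z - hC g w) = ht (F o3) * Cmod (z - w).
Proof.
  intros z w. pose proof HF as [Iso _].
  set (p := mkH3 z 1 Rlt_0_1). set (p' := mkH3 w 1 Rlt_0_1).
  pose proof (iso_Eh F Iso p p') as E. unfold Eh in E.
  rewrite (buse p), (buse p'), (horiz p), (horiz p') in E. unfold p, p' in E; simpl in E.
  set (lam := ht (F o3)) in *. assert (Hl : 0 < lam) by apply ht_pos.
  apply sq_inj.
  - apply Cmod_ge_0.
  - apply Rmult_le_pos; [lra | apply Cmod_ge_0].
  - replace (lam * 1 - lam * 1) with 0 in E by ring.
    replace (1 - 1) with 0 in E by ring.
    assert (E2 : Cmod (hC g z - hC g w) ^ 2 / (2 * (lam * 1) * (lam * 1)) = Cmod (z - w) ^ 2 / (2 * 1 * 1)).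
    { replace (Cmod (hC g z - hC g w) ^ 2 / (2 * (lam * 1) * (lam * 1))) with
        ((Cmod (hC g z - hC g w) ^ 2 + 0 ^ 2) / (2 * (lam * 1) * (lam * 1))) by (field; lra).
      replace (Cmod (z - w) ^ 2 / (2 * 1 * 1)) with ((Cmod (z - w) ^ 2 + 0 ^ 2) / (2 * 1 * 1)) by (field; lra).
      lra. }
    apply (Rmult_eq_reg_r (/ (2 * lam ^ 2))).
    + replace (Cmod (hC g z - hC g w) ^ 2 * / (2 * lam ^ 2)) with
        (Cmod (hC g z - hC g w) ^ 2 / (2 * (lam * 1) * (lam * 1))) by (field; lra).
      rewrite E2. field. lra.
    + apply Rinv_neq_0_compat. nra.
Qed.

End Struct.


Fixpoint selseq (c : nat -> nat -> nat) (k : nat) : nat :=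
  match k with O => c O O | S k' => c k (S (selseq c k')) end.

Lemma select (Q : nat -> nat -> Prop) :
  (forall k N, exists i, (N <= i)%nat /\ Q k i) ->
  exists phi : nat -> nat, (forall k, (phi k < phi (S k))%nat) /\ forall k, Q k (phi k).
Proof.
  intros H.
  set (c := fun k N => proj1_sig (constructive_indefinite_description _ (H k N))).
  assert (Hc : forall k N, (N <= c k N)%nat /\ Q k (c k N)).
  { intros k N. unfold c. destruct (constructive_indefinite_description _ (H k N)); simpl; auto. }
  exists (selseq c). split.
  - intros k. simpl. destruct (Hc (S k) (S (selseq c k))). lia.
  - intros [|k]; simpl; apply Hc.
Qed.

Lemma incr_ge (phi : nat -> nat) : (forall k, (phi k < phi (S k))%nat) -> forall k, (k <= phi k)%nat.
Proof. intros H k; induction k; [lia|]. specialize (H k). lia. Qed.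

Lemma inf_pigeon (M : nat) (P : nat -> nat -> Prop) :
  (forall N, exists i, (N <= i)%nat /\ exists n, (n < M)%nat /\ P i n) ->
  exists n, (n < M)%nat /\ forall N, exists i, (N <= i)%nat /\ P i n.
Proof.
  induction M as [|M IH]; intros H.
  - destruct (H O) as [i [_ [n [Hn _]]]]. lia.
  - destruct (classic (forall N, exists i, (N <= i)%nat /\ P i M)) as [A|A].
    + exists M. split; auto.
    + apply not_all_ex_not in A. destruct A as [N0 A].
      destruct IH as [n [Hn Hn2]].
      * intros N. destruct (H (max N N0)) as [i [Hi [n [Hn Pn]]]].
        exists i. split; [lia|]. exists n. split; auto.
        destruct (Nat.eq_dec n M); [|lia]. subst. exfalso. apply A. exists i. split; auto. lia.
      * exists n. split; auto.
Qed.

Lemma fin_pigeon {A : Type} (k : nat -> A) (l : list A) :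
  (forall n, In (k n) l) -> exists n m, (n < m)%nat /\ k n = k m.
Proof.
  intros H. apply NNPP. intro Hn.
  assert (Inj : Injective k).
  { intros a b E. destruct (Nat.lt_trichotomy a b) as [L|[L|L]]; auto.
    - exfalso; apply Hn; exists a, b; auto.
    - exfalso; apply Hn; exists b, a; auto. }
  assert (ND : NoDup (map k (seq 0 (S (length l))))).
  { apply Injective_map_NoDup; auto. apply seq_NoDup. }
  assert (Inc : incl (map k (seq 0 (S (length l)))) l).
  { intros a Ha. apply in_map_iff in Ha. destruct Ha as [x [E _]]. subst. apply H. }
  pose proof (NoDup_incl_length ND Inc) as L. rewrite length_map, length_seq in L. lia.
Qed.

Lemma H3_eq (x y : H3) : hz x = hz y -> ht x = ht y -> x = y.
Proof.
  destruct x as [zx tx px], y as [zy ty py]; simpl; intros E1 E2. subst.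
  f_equal. apply proof_irrelevance.
Qed.

Lemma hdist_self x : hdist x x = 0.
Proof.
  rewrite hdist_Eh. unfold Eh.
  assert (Hzz : (hz x - hz x)%C = RtoC 0) by ring. rewrite Hzz, Cmod_0.
  replace ((0 ^ 2 + (ht x - ht x) ^ 2) / (2 * ht x * ht x)) with 0.
  - rewrite Rplus_0_r. apply acosh_1.
  - pose proof (ht_pos x). field. lra.
Qed.

Lemma Eh_le3_bounds x p : Eh x p <= 3 ->
  Cmod (hz x) <= Cmod (hz p) + 5 * ht p /\ ht x <= 6 * ht p /\ / ht x <= 6 / ht p.
Proof.
  intros H. unfold Eh in H. pose proof (ht_pos x) as Hx. pose proof (ht_pos p) as Hp.
  set (A := Cmod (hz x - hz p)) in H.
  assert (K : A ^ 2 + (ht x - ht p) ^ 2 <= 4 * ht x * ht p).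
  { assert (K1 : (A ^ 2 + (ht x - ht p) ^ 2) / (2 * ht x * ht p) <= 2) by lra.
    apply Rmult_le_compat_r with (r := 2 * ht x * ht p) in K1; [|nra].
    unfold Rdiv in K1. rewrite Rmult_assoc, Rinv_l in K1 by nra. lra. }
  assert (T1 : ht x <= 6 * ht p) by nra.
  assert (T2 : ht p <= 6 * ht x) by nra.
  assert (A0 : 0 <= A) by apply Cmod_ge_0.
  assert (TA : A <= 5 * ht p) by nra.
  split; [|split; auto].
  - replace (hz x) with (hz p + (hz x - hz p))%C by ring.
    pose proof (Cmod_triangle (hz p) (hz x - hz p)). fold A in H0. lra.
  - apply (Rmult_le_reg_l (ht x * ht p)); [nra|].
    replace (ht x * ht p * / ht x) with (ht p) by (field; lra).
    replace (ht x * ht p * (6 / ht p)) with (6 * ht x) by (field; lra). lra.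
Qed.

Lemma compact_bounds K : h_compact K ->
  exists B, 0 < B /\ forall x, K x -> Cmod (hz x) <= B /\ ht x <= B /\ / B <= ht x.
Proof.
  intros HK. apply NNPP. intro Hn.
  set (fB := fun x => Cmod (hz x) + ht x + / ht x).
  assert (Ex : forall n : nat, exists x, K x /\ INR n < fB x).
  { intros n. apply NNPP. intro Hn2. apply Hn. exists (INR n + 1). split.
    - pose proof (pos_INR n). lra.
    - intros x Kx. assert (fB x <= INR n).
      { apply Rnot_lt_le. intro L. apply Hn2. exists x; auto. }
      pose proof (Cmod_ge_0 (hz x)). pose proof (ht_pos x).
      assert (0 < / ht x) by (apply Rinv_0_lt_compat; auto).
      unfold fB in H. split; [lra|]. split; [lra|].
      pose proof (pos_INR n).
      replace (ht x) with (/ / ht x) by (field; lra).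
      apply Rinv_le_contravar; auto. lra. }
  set (xs := fun n => proj1_sig (constructive_indefinite_description _ (Ex n))).
  assert (Hxs : forall n, K (xs n) /\ INR n < fB (xs n)).
  { intros n. unfold xs. destruct (constructive_indefinite_description _ (Ex n)); simpl; auto. }
  destruct (HK xs (fun n => proj1 (Hxs n))) as [phi [Hphi [p [Kp Hc]]]].
  unfold h_conv in Hc.
  pose proof (proj2 (is_lim_seq_spec _ _) Hc (mkposreal 1 Rlt_0_1)) as E1. simpl in E1.
  set (Cp := Cmod (hz p) + 5 * ht p + 6 * ht p + 6 / ht p).
  pose proof (proj2 (is_lim_seq_spec _ _) is_lim_seq_INR Cp) as E2. simpl in E2.
  destruct E1 as [N1 E1]. destruct E2 as [N2 E2].
  set (n := max N1 N2).
  specialize (E1 n ltac:(lia)). specialize (E2 n ltac:(lia)).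
  rewrite Rminus_0_r in E1.
  assert (Hd : hdist (xs (phi n)) p <= 1).
  { pose proof (Rle_abs (hdist (xs (phi n)) p)). lra. }
  rewrite hdist_Eh in Hd. apply acosh_le1 in Hd; [|apply Eh_ge1].
  apply Eh_le3_bounds in Hd. destruct Hd as [B1 [B2 B3]].
  destruct (Hxs (phi n)) as [_ Lf]. unfold fB in Lf.
  pose proof (incr_ge phi Hphi n) as Ge. apply le_INR in Ge.
  unfold Cp in E2. lra.
Qed.


Lemma const_sub (K : H3 -> Prop) (x : nat -> H3) (c : H3) : K c ->
  (forall N, exists i, (N <= i)%nat /\ x i = c) ->
  exists phi : nat -> nat, (forall n, (phi n < phi (S n))%nat) /\
      exists p, K p /\ h_conv (fun n => x (phi n)) p.
Proof.
  intros Kc H. destruct (select (fun _ i => x i = c)) as [phi [H1 H2]].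
  { intros _ N. apply H. }
  exists phi. split; auto. exists c. split; auto. unfold h_conv.
  apply is_lim_seq_ext with (u := fun _ => 0).
  - intros n. rewrite H2. rewrite hdist_self. reflexivity.
  - apply is_lim_seq_const.
Qed.

Lemma not_inf (P : nat -> Prop) : ~ (forall N, exists i, (N <= i)%nat /\ P i) ->
  exists N, forall i, (N <= i)%nat -> ~ P i.
Proof.
  intros H. apply not_all_ex_not in H. destruct H as [N H]. exists N.
  intros i Hi Pi. apply H. exists i; auto.
Qed.

Lemma seq_compact (P0 Qi : H3) (q : nat -> H3) :
  is_lim_seq (fun n => hdist (q n) Qi) 0 ->
  h_compact (fun x => x = P0 \/ x = Qi \/ exists n, x = q n).
Proof.
  intros Lq x Hx.
  destruct (classic (forall N, exists i, (N <= i)%nat /\ x i = P0)) as [A|A].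
  { apply (const_sub _ x P0); auto. }
  destruct (classic (forall N, exists i, (N <= i)%nat /\ x i = Qi)) as [A'|A'].
  { apply (const_sub _ x Qi); auto. }
  apply not_inf in A. apply not_inf in A'. destruct A as [N1 A]. destruct A' as [N2 A'].
  assert (Ev : forall i, (max N1 N2 <= i)%nat -> exists n, x i = q n).
  { intros i Hi. destruct (Hx i) as [E|[E|E]]; auto.
    - exfalso; apply (A i); [lia|auto].
    - exfalso; apply (A' i); [lia|auto]. }
  destruct (classic (forall k N, exists i, (N <= i)%nat /\ exists n, (k <= n)%nat /\ x i = q n)) as [B|B].
  - destruct (select _ B) as [phi [H1 H2]].
    exists phi. split; auto. exists Qi. split; auto. unfold h_conv.
    apply is_lim_seq_spec. intros eps.
    pose proof (proj2 (is_lim_seq_spec _ _) Lq eps) as [N HN].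
    exists N. intros k Hk. destruct (H2 k) as [n [Hn E]]. rewrite E. apply HN. lia.
  - apply not_all_ex_not in B. destruct B as [k0 B]. apply not_inf in B. destruct B as [N0 B].
    destruct (inf_pigeon k0 (fun i n => x i = q n)) as [n [Hn Inf]].
    + intros N. exists (max N (max N0 (max N1 N2))). split; [lia|].
      destruct (Ev (max N (max N0 (max N1 N2))) ltac:(lia)) as [n En].
      exists n. split; auto.
      destruct (Nat.lt_ge_cases n k0) as [L|L]; auto.
      exfalso. apply (B (max N (max N0 (max N1 N2)))); [lia|]. exists n; auto.
    + apply (const_sub _ x (q n)); auto. right; right; exists n; auto.
Qed.

Fixpoint itC (f : C -> C) (n : nat) (u : C) : C :=
  match n with O => u | S n' => f (itC f n' u) end.

Lemma Cmod_le_sum (z : C) : Cmod z <= Rabs (fst z) + Rabs (snd z).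
Proof.
  unfold Cmod. rewrite <- (sqrt_pow2 (Rabs (fst z) + Rabs (snd z))).
  - apply sqrt_le_1_alt. rewrite <- (pow2_abs (fst z)), <- (pow2_abs (snd z)).
    pose proof (Rabs_pos (fst z)). pose proof (Rabs_pos (snd z)). nra.
  - pose proof (Rabs_pos (fst z)). pose proof (Rabs_pos (snd z)). lra.
Qed.

Lemma fixpt (f : C -> C) (l : R) : 0 <= l < 1 ->
  (forall z w, Cmod (f z - f w) = l * Cmod (z - w)) -> exists z0, f z0 = z0.
Proof.
  intros Hl Hf.
  set (u := fun n => itC f n 0%C).
  set (d0 := Cmod (u 1%nat - u 0%nat)).
  assert (Hd0 : 0 <= d0) by apply Cmod_ge_0.
  assert (S1 : forall n, Cmod (u (S n) - u n) = l ^ n * d0).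
  { induction n.
    - simpl. fold d0. ring.
    - change (u (S (S n))) with (f (u (S n))). change (u (S n)) with (f (u n)) at 2.
      rewrite Hf. change (f (u n)) with (u (S n)). rewrite IHn. simpl. ring. }
  assert (S2 : forall n k, Cmod (u (n + k)%nat - u n) <= d0 * (l ^ n - l ^ (n + k)) / (1 - l)).
  { intros n k. induction k.
    - rewrite Nat.add_0_r. assert (Hzz : (u n - u n)%C = RtoC 0) by ring.
      rewrite Hzz, Cmod_0. right. field. lra.
    - rewrite Nat.add_succ_r.
      replace (u (S (n + k)) - u n)%C with ((u (S (n + k)) - u (n + k)%nat) + (u (n + k)%nat - u n))%C by ring.
      eapply Rle_trans. apply Cmod_triangle. rewrite S1.
      replace (d0 * (l ^ n - l ^ S (n + k)) / (1 - l)) with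
        (l ^ (n + k) * d0 + d0 * (l ^ n - l ^ (n + k)) / (1 - l)) by (simpl; field; lra).
      lra. }
  assert (S3 : forall n m, (n <= m)%nat -> Cmod (u m - u n) <= d0 * l ^ n / (1 - l)).
  { intros n m Hnm. replace m with (n + (m - n))%nat by lia.
    eapply Rle_trans. apply S2.
    assert (0 <= l ^ (n + (m - n))) by (apply pow_le; lra).
    apply Rmult_le_compat_r. left; apply Rinv_0_lt_compat; lra. nra. }
  assert (Cau : forall (pr : C -> R), (forall z, Rabs (pr z) <= Cmod z) ->
             (forall z w, pr (z - w)%C = pr z - pr w) ->
             exists a : R, is_lim_seq (fun n => pr (u n)) a).
  { intros pr Hpr Hlin.
    assert (ex_finite_lim_seq (fun n => pr (u n))) as [a Ha].
    { apply ex_lim_seq_cauchy_corr. intros eps.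
      destruct (pow_lt_1_zero l ltac:(rewrite Rabs_right; lra) (eps * (1 - l) / (d0 + 1)))
        as [N HN].
      { apply Rdiv_lt_0_compat; [|lra]. apply Rmult_lt_0_compat; [apply cond_pos|lra]. }
      exists N. intros n m Hn Hm.
      assert (G : forall a b, (N <= a)%nat -> (a <= b)%nat -> Rabs (pr (u a) - pr (u b)) < eps).
      { intros a b Ha Hb. rewrite <- Hlin. eapply Rle_lt_trans. apply Hpr.
        replace (u a - u b)%C with (- (u b - u a))%C by ring. rewrite Cmod_opp.
        eapply Rle_lt_trans. apply S3; auto.
        specialize (HN a Ha). rewrite Rabs_right in HN by (apply Rle_ge; apply pow_le; lra).
        apply (Rmult_lt_reg_r (1 - l)); [lra|].
        replace (d0 * l ^ a / (1 - l) * (1 - l)) with (d0 * l ^ a) by (field; lra).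
        assert (l ^ a * (d0 + 1) < eps * (1 - l)).
        { apply (Rmult_lt_reg_r (/ (d0 + 1))). apply Rinv_0_lt_compat; lra.
          replace (l ^ a * (d0 + 1) * / (d0 + 1)) with (l ^ a) by (field; lra). auto. }
        assert (0 <= l ^ a) by (apply pow_le; lra). nra. }
      destruct (Nat.le_ge_cases n m) as [L|L].
      - apply G; auto.
      - rewrite Rabs_minus_sym. apply G; auto. }
    exists a; auto. }
  destruct (Cau fst) as [a Ha].
  { intros z. apply re_le_Cmod. }
  { intros; reflexivity. }
  destruct (Cau snd) as [b Hb].
  { intros z. pose proof (Rmax_Cmod z). pose proof (Rmax_r (Rabs (fst z)) (Rabs (snd z))). lra. }
  { intros; reflexivity. }
  set (L := (a, b) : C).
  assert (Lu : is_lim_seq (fun n => Cmod (u n - L)) 0).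
  { apply is_lim_seq_le_le with (u := fun _ => 0) (w := fun n => Rabs (fst (u n) - a) + Rabs (snd (u n) - b)).
    - intros n. split. apply Cmod_ge_0. apply Cmod_le_sum.
    - apply is_lim_seq_const.
    - replace (Finite 0) with (Finite (0 + 0)) by (f_equal; ring).
      apply is_lim_seq_plus'; apply -> is_lim_seq_abs_0.
      + replace (Finite 0) with (Finite (a - a)) by (f_equal; ring).
        apply is_lim_seq_minus'; auto. apply is_lim_seq_const.
      + replace (Finite 0) with (Finite (b - b)) by (f_equal; ring).
        apply is_lim_seq_minus'; auto. apply is_lim_seq_const. }
  exists L.
  assert (Bd : forall n, Cmod (f L - L) <= l * Cmod (u n - L) + Cmod (u (S n) - L)).
  { intros n. change (u (S n)) with (f (u n)).
    replace (f L - L)%C with ((f L - f (u n)) + (f (u n) - L))%C by ring.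
    eapply Rle_trans. apply Cmod_triangle. rewrite Hf.
    replace (L - u n)%C with (- (u n - L))%C by ring. rewrite Cmod_opp. lra. }
  assert (Lr : is_lim_seq (fun n => l * Cmod (u n - L) + Cmod (u (S n) - L)) 0).
  { replace (Finite 0) with (Finite (l * 0 + 0)) by (f_equal; ring).
    apply is_lim_seq_plus'. apply is_lim_seq_mult'; auto. apply is_lim_seq_const.
    apply (is_lim_seq_incr_1 (fun n => Cmod (u n - L))). auto. }
  pose proof (is_lim_seq_le _ _ _ _ Bd (is_lim_seq_const _) Lr) as Le. simpl in Le.
  assert (Z : Cmod (f L - L) = 0) by (pose proof (Cmod_ge_0 (f L - L)); lra).
  apply Cmod_eq_0 in Z.
  assert (E1 := f_equal fst Z). assert (E2 := f_equal snd Z). csimpl_in E1. csimpl_in E2.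
  apply Ceq; simpl in *; lra.
Qed.


Fixpoint itf (f : Sph -> Sph) (n : nat) (x : Sph) : Sph :=
  match n with O => x | S n' => f (itf f n' x) end.

Lemma pow_le1 (l : R) (k : nat) : 0 <= l <= 1 -> l ^ k <= 1.
Proof.
  intros H. induction k; simpl; [lra|].
  assert (0 <= l ^ k) by (apply pow_le; lra). nra.
Qed.

Lemma pow_lt1 (l : R) (k : nat) : 0 <= l < 1 -> l ^ (S k) < 1.
Proof.
  intros H. simpl. pose proof (pow_le1 l k ltac:(lra)).
  assert (0 <= l ^ k) by (apply pow_le; lra). nra.
Qed.

Lemma Cmod_01 : Cmod (0 - 1)%C = 1.
Proof. replace (0 - 1)%C with (- (1))%C by ring. rewrite Cmod_opp, Cmod_1. reflexivity. Qed.

Lemma exists_nonfix (G : (Sph -> Sph) -> Prop) : nice_lattice G -> exists g w, G g /\ g None = Some w.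
Proof.
  intros [S [act [Ext [Free [PD CoC]]]]].
  destruct S as [Conf [Gid [Gcomp Ginv]]].
  apply NNPP; intro Hn.
  assert (AF : forall g, G g -> g None = None).
  { intros g Gg. destruct (g None) as [c|] eqn:E; auto. exfalso; apply Hn; exists g, c; auto. }
  assert (Hom : forall g, G g -> homeomorphism g) by (intros g Gg; apply (Conf g Gg)).
  set (lamg := fun g => ht (act g o3)).
  assert (HT : forall g p, G g -> ht (act g p) = lamg g * ht p).
  { intros g p Gg. apply (buse g (act g) (AF g Gg) (Ext g Gg)). }
  assert (HZ : forall g p, G g -> hz (act g p) = hC g (hz p)).
  { intros g p Gg. apply (horiz g (act g) (Hom g Gg) (AF g Gg) (Ext g Gg)). }
  assert (SIM : forall g z w, G g -> Cmod (hC g z - hC g w) = lamg g * Cmod (z - w)).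
  { intros g z w Gg. apply (simil g (act g) (Hom g Gg) (AF g Gg) (Ext g Gg)). }
  assert (SOME : forall g z, G g -> g (Some z) = Some (hC g z)).
  { intros g z Gg. apply (hSome g (Hom g Gg) (AF g Gg)). }
  assert (LP : forall g, 0 < lamg g) by (intros; apply ht_pos).
  assert (INV : forall g g', G g -> G g' -> (forall x, g' (g x) = x) ->
             (forall z, hC g' (hC g z) = z) /\ lamg g' * lamg g = 1).
  { intros g g' Gg Gg' Hgg.
    assert (Iz : forall z, hC g' (hC g z) = z).
    { intros z. pose proof (Hgg (Some z)) as E. rewrite (SOME g z Gg), (SOME g' _ Gg') in E.
      injection E; auto. }
    split; auto.
    pose proof (SIM g' (hC g 0%C) (hC g 1%C) Gg') as E. rewrite !Iz, (SIM g 0%C 1%C Gg), Cmod_01 in E.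
    lra. }
  destruct CoC as [K [HK Cov]].
  destruct (compact_bounds K HK) as [B [HB KB]].
  destruct (classic (forall g, G g -> lamg g = 1)) as [All1|Not1].
  {
    assert (P2 : 0 < 2 * B) by lra.
    destruct (Cov (mkH3 0%C (2 * B) P2)) as [g [x [Gg [Kx Ex]]]].
    pose proof (HT g x Gg) as E. rewrite Ex, All1 in E by auto. simpl in E.
    destruct (KB x Kx) as [_ [Hx _]]. lra. }
  apply not_all_ex_not in Not1. destruct Not1 as [g0 Not1].
  apply imply_to_and in Not1. destruct Not1 as [Gg0 Ng0].
  assert (Ex1 : exists g1, G g1 /\ lamg g1 < 1).
  { destruct (Rlt_dec (lamg g0) 1) as [L|L].
    - exists g0; auto.
    - destruct (Ginv g0 Gg0) as [g0' [Gg0' [_ K2]]].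
      exists g0'. split; auto. destruct (INV g0 g0' Gg0 Gg0' K2) as [_ E].
      pose proof (LP g0). pose proof (LP g0').
      assert (lamg g0 > 1) by lra. nra. }
  destruct Ex1 as [g1 [Gg1 Hl1]].
  set (l := lamg g1). assert (Hl : 0 < l) by apply LP.
  assert (Hl2 : 0 <= l < 1) by (unfold l in *; lra).
  destruct (fixpt (hC g1) l Hl2 (fun z w => SIM g1 z w Gg1)) as [z0 Hz0].
  destruct (Ginv g1 Gg1) as [g1' [Gg1' [K1 K2]]].
  destruct (INV g1 g1' Gg1 Gg1' K2) as [Iz1 Ell].
  assert (Hz0' : hC g1' z0 = z0).
  { rewrite <- Hz0 at 1. apply Iz1. }
  assert (Gitf : forall f, G f -> forall n, G (itf f n)).
  { intros f Gf n. induction n. exact Gid. exact (Gcomp f (itf f n) Gf IHn). }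
  assert (itfS : forall f, G f -> forall n z, itf f n (Some z) = Some (itC (hC f) n z)).
  { intros f Gf n z. induction n; simpl; auto. rewrite IHn. apply SOME; auto. }
  assert (itCfix : forall f n, hC f z0 = z0 -> itC (hC f) n z0 = z0).
  { intros f n Hf. induction n; simpl; auto. rewrite IHn; auto. }
  assert (itCsim : forall f, G f -> forall n a b,
             Cmod (itC (hC f) n a - itC (hC f) n b) = lamg f ^ n * Cmod (a - b)).
  { intros f Gf n a b. induction n; simpl. ring. rewrite SIM, IHn; auto. ring. }
  assert (FixAll : forall g, G g -> hC g z0 = z0).
  { intros g Gg. apply NNPP; intro Ha.
    set (a0 := hC g z0).
    set (delta := Cmod (a0 - z0)).
    assert (Hd : 0 < delta).
    { apply Cmod_gt_0. intro E. apply Ha. fold a0.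
      assert (E1 := f_equal fst E). assert (E2 := f_equal snd E). csimpl_in E1. csimpl_in E2.
      apply Ceq; simpl in *; lra. }
    set (kn := fun n x => itf g1 n (g (itf g1' n x))).
    assert (Gkn : forall n, G (kn n)).
    { intros n. apply (Gcomp (itf g1 n) (fun x => g (itf g1' n x))). apply Gitf; auto.
      apply Gcomp; auto. }
    assert (hkn : forall n z, hC (kn n) z = itC (hC g1) n (hC g (itC (hC g1') n z))).
    { intros n z. pose proof (SOME (kn n) z (Gkn n)) as E. unfold kn in E at 1.
      rewrite itfS, SOME, itfS in E; auto. inversion E; auto. }
    assert (hkn0 : forall n, hC (kn n) z0 = itC (hC g1) n a0).
    { intros n. rewrite hkn, itCfix; auto. }
    assert (lamkn : forall n, lamg (kn n) = lamg g).
    { intros n. pose proof (SIM (kn n) 0%C 1%C (Gkn n)) as E.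
      rewrite !hkn, itCsim, SIM, itCsim, Cmod_01 in E; auto.
      unfold l in *.
      assert (Hp : lamg g1 ^ n * lamg g1' ^ n = 1).
      { rewrite <- Rpow_mult_distr. replace (lamg g1 * lamg g1') with 1 by lra. apply pow1. }
      transitivity (lamg g1 ^ n * (lamg g * (lamg g1' ^ n * 1))). lra.
      replace (lamg g1 ^ n * (lamg g * (lamg g1' ^ n * 1))) with (lamg g * (lamg g1 ^ n * lamg g1' ^ n)) by ring.
      rewrite Hp. ring. }
    set (lg := lamg g). assert (Hlg : 0 < lg) by apply LP.
    set (p0 := mkH3 z0 1 Rlt_0_1).
    set (qn := fun n => mkH3 (itC (hC g1) n a0) lg Hlg).
    set (qi := mkH3 z0 lg Hlg).
    assert (Act : forall n, act (kn n) p0 = qn n).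
    { intros n. apply H3_eq.
      - rewrite (HZ (kn n) p0 (Gkn n)). apply hkn0.
      - rewrite (HT (kn n) p0 (Gkn n)), lamkn. simpl. fold lg. ring. }
    assert (Lq : is_lim_seq (fun n => hdist (qn n) qi) 0).
    { apply is_lim_seq_ext with (u := fun n => acosh (Eh (qn n) qi)).
      { intros n. reflexivity. }
      apply lim_acosh. intros; apply Eh_ge1.
      apply is_lim_seq_ext with (u := fun n => 1 + (l ^ n * l ^ n) * (delta ^ 2 / (2 * lg * lg))).
      { intros n. unfold Eh, qn, qi. cbn [hz ht].
        replace (itC (hC g1) n a0 - z0)%C with (itC (hC g1) n a0 - itC (hC g1) n z0)%C
          by (rewrite itCfix; auto).
        rewrite itCsim; auto. unfold l, delta. field. lra. }
      replace (Finite 1) with (Finite (1 + (0 * 0) * (delta ^ 2 / (2 * lg * lg)))) by (f_equal; ring).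
      apply is_lim_seq_plus'. apply is_lim_seq_const.
      apply is_lim_seq_mult'; [|apply is_lim_seq_const].
      apply is_lim_seq_mult'; apply is_lim_seq_geom; rewrite Rabs_right; lra. }
    pose proof (seq_compact p0 qi qn Lq) as HK'.
    destruct (PD _ HK') as [l0 Hl0].
    assert (Inl : forall n, In (kn n) l0).
    { intros n. apply Hl0; auto. exists p0. split. left; auto. right; right. exists n. apply Act. }
    destruct (fin_pigeon kn l0 Inl) as [n [m [Hnm Ek]]].
    assert (E : itC (hC g1) n a0 = itC (hC g1) m a0).
    { rewrite <- !hkn0. rewrite Ek. reflexivity. }
    assert (E2 : l ^ n * delta = l ^ m * delta).
    { unfold l, delta. rewrite <- !itCsim; auto. rewrite !itCfix; auto. rewrite E. reflexivity. }
    assert (E3 : l ^ n = l ^ m) by (apply (Rmult_eq_reg_r delta); lra).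
    replace m with (n + S (m - n - 1))%nat in E3 by lia.
    rewrite pow_add in E3.
    pose proof (pow_lt1 l (m - n - 1) ltac:(lra)).
    assert (0 < l ^ n) by (apply pow_lt; lra). nra. }
  set (R0 := B * (B + Cmod z0) + 1).
  destruct (Cov (mkH3 (z0 + RtoC R0)%C 1 Rlt_0_1)) as [g [x [Gg [Kx Ex]]]].
  destruct (KB x Kx) as [Bz [Bt Bt']].
  pose proof (HT g x Gg) as Et. rewrite Ex in Et. simpl in Et.
  pose proof (HZ g x Gg) as Ez. rewrite Ex in Ez. simpl in Ez.
  pose proof (ht_pos x) as Px.
  assert (Lg : lamg g <= B).
  { assert (lamg g = / ht x) by (apply (Rmult_eq_reg_r (ht x)); [|lra]; rewrite Rinv_l; lra).
    rewrite H. replace B with (/ / B) by (field; lra). apply Rinv_le_contravar; auto.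
    apply Rinv_0_lt_compat; auto. }
  pose proof (SIM g (hz x) z0 Gg) as Es. rewrite (FixAll g Gg), <- Ez in Es.
  replace (z0 + RtoC R0 - z0)%C with (RtoC R0) in Es by ring.
  rewrite Cmod_R in Es.
  assert (Cmod (hz x - z0) <= Cmod (hz x) + Cmod z0).
  { replace (hz x - z0)%C with (hz x + - z0)%C by ring.
    eapply Rle_trans. apply Cmod_triangle. rewrite Cmod_opp. lra. }
  pose proof (Cmod_ge_0 z0). pose proof (Cmod_ge_0 (hz x - z0)).
  assert (0 < R0) by (unfold R0; nra).
  rewrite Rabs_right in Es by lra.
  assert (lamg g * Cmod (hz x - z0) <= B * (B + Cmod z0)).
  { apply Rmult_le_compat; try lra. left; apply LP. }
  unfold R0 in Es. lra.
Qed.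


Theorem lemma1p6 (h : Sph -> Sph) (G1 G2 : (Sph -> Sph) -> Prop) :
  homeomorphism h -> h None = None ->
  nice_lattice G1 -> nice_lattice G2 ->
  (forall g, G2 g <-> exists g1, G1 g1 /\ forall x, g (h x) = h (g1 x)) ->
  (exists v1 v2 : C, v1 <> 0%C /\ v2 <> 0%C /\
     (forall r : R, v2 <> (RtoC r * v1)%C) /\
     good_direction h v1 /\ good_direction h v2) ->
  conformal h.
Proof.
  intros Hh HN N1 N2 Hconj [v1 [v2 [Hv1 [Hv2 [Hind [Gd1 Gd2]]]]]].
  pose proof (indep_det v1 v2 Hv1 Hind) as D.
  pose proof (affine_rep h v1 v2 Hh HN Hv1 Hv2 D Gd1 Gd2) as Hr.
  apply (conformal_from_nonfix h G1 G2 _ _ _ Hh HN (proj1 N1) (proj1 N2) Hconj Hr).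
  apply exists_nonfix; auto.
Qed.
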